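(* The monoidal category $\mathbf{CrysTL}$ does not admit a braiding.
   Context: $\Bbbk$ is a field. $\mathcal{TL}_0(\Bbbk)$ is the strict $\Bbbk$-linear monoidal category with objects $\mathbf 0,\mathbf 1,\dots$, $\mathbf m\otimes\mathbf n=\mathbf{m+n}$, generated by $\mathrm{cup}:\mathbf 0\to\mathbf 2$ and $\mathrm{cap}:\mathbf 2\to\mathbf 0$ subject to $(\mathrm{id}_{\mathbf 1}\otimes\mathrm{cap})\circ(\mathrm{cup}\otimes\mathrm{id}_{\mathbf 1})=0=(\mathrm{cap}\otimes\mathrm{id}_{\mathbf 1})\circ(\mathrm{id}_{\mathbf 1}\otimes\mathrm{cup})$ and $\mathrm{cap}\circ\mathrm{cup}=\mathrm{id}_{\mathbf 0}$. $\mathbf{CrysTL}$ is its Cauchy completion (idempotent completion of the additive envelope) with the induced monoidal structure. *)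

(* Defs.v *)
From HB Require Import structures.
From mathcomp Require Import all_boot all_algebra.
Set Implicit Arguments. Unset Strict Implicit. Unset Printing Implicit Defensive.

(* TL_0(k): the strict k-linear monoidal category with objects 0,1,2,...     *)
(* (m (x) n = m + n), freely generated by cup : 0 -> 2, cap : 2 -> 0 modulo  *)
(*   (id_1 (x) cap) o (cup (x) id_1) = 0 = (cap (x) id_1) o (id_1 (x) cup),   *)
(*   cap o cup = id_0.                                                       *)
(* It is presented syntactically: terms of the free k-linear strict monoidal *)
(* category, with typing (dom/cod/wt) and the congruence [eqv] generated by  *)
(* the k-linear-category and strict-monoidal axioms plus the three relations.*)
(* Hom(m,n) = well-typed terms of type m -> n modulo [eqv].                  *)

Section TL0.
Variable k : fieldType.

Inductive tm : Type :=
| Id of nat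
| Cup
| Cap
| Comp of tm & tm          (* Comp f g = f o g *)
| Tens of tm & tm
| Zero of nat & nat
| Add of tm & tm
| Scal of k & tm.

Fixpoint dom (t : tm) : nat :=
  match t with
  | Id n => n | Cup => 0 | Cap => 2
  | Comp f g => dom g
  | Tens f g => dom f + dom g
  | Zero m _ => m
  | Add f _ => dom f
  | Scal _ f => dom f
  end.

Fixpoint cod (t : tm) : nat :=
  match t with
  | Id n => n | Cup => 2 | Cap => 0
  | Comp f g => cod f
  | Tens f g => cod f + cod g
  | Zero _ n => n
  | Add f _ => cod f
  | Scal _ f => cod f
  end.

Fixpoint wt (t : tm) : bool :=
  match t with
  | Id _ | Cup | Cap | Zero _ _ => true
  | Comp f g => [&& wt f, wt g & cod g == dom f]
  | Tens f g => wt f && wt g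
  | Add f g => [&& wt f, wt g, dom f == dom g & cod f == cod g]
  | Scal _ f => wt f
  end.

(* Defining axioms (only used between well-typed terms of equal type). *)
Inductive ax : tm -> tm -> Prop :=
| ax_addA f g h : ax (Add f (Add g h)) (Add (Add f g) h)
| ax_addC f g : ax (Add f g) (Add g f)
| ax_add0 f : ax (Add f (Zero (dom f) (cod f))) f
| ax_addN f : ax (Add f (Scal (-1)%R f)) (Zero (dom f) (cod f))
| ax_scalD c f g : ax (Scal c (Add f g)) (Add (Scal c f) (Scal c g))
| ax_scalDl c d f : ax (Scal (c + d)%R f) (Add (Scal c f) (Scal d f))
| ax_scalA c d f : ax (Scal (c * d)%R f) (Scal c (Scal d f))
| ax_scal1 f : ax (Scal 1%R f) f
| ax_compA f g h : ax (Comp f (Comp g h)) (Comp (Comp f g) h)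
| ax_compIdl f : ax (Comp (Id (cod f)) f) f
| ax_compIdr f : ax (Comp f (Id (dom f))) f
| ax_compDl f f' g : ax (Comp (Add f f') g) (Add (Comp f g) (Comp f' g))
| ax_compDr f g g' : ax (Comp f (Add g g')) (Add (Comp f g) (Comp f g'))
| ax_compZl c f g : ax (Comp (Scal c f) g) (Scal c (Comp f g))
| ax_compZr c f g : ax (Comp f (Scal c g)) (Scal c (Comp f g))
| ax_tensA f g h : ax (Tens f (Tens g h)) (Tens (Tens f g) h)
| ax_tens1l f : ax (Tens (Id 0) f) f
| ax_tens1r f : ax (Tens f (Id 0)) f
| ax_tensId m n : ax (Tens (Id m) (Id n)) (Id (m + n))
| ax_interchange f g f' g' :
    ax (Comp (Tens f g) (Tens f' g')) (Tens (Comp f f') (Comp g g'))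
| ax_tensDl f f' g : ax (Tens (Add f f') g) (Add (Tens f g) (Tens f' g))
| ax_tensDr f g g' : ax (Tens f (Add g g')) (Add (Tens f g) (Tens f g'))
| ax_tensZl c f g : ax (Tens (Scal c f) g) (Scal c (Tens f g))
| ax_tensZr c f g : ax (Tens f (Scal c g)) (Scal c (Tens f g))
| ax_zig : ax (Comp (Tens (Id 1) Cap) (Tens Cup (Id 1))) (Zero 1 1)
| ax_zag : ax (Comp (Tens Cap (Id 1)) (Tens (Id 1) Cup)) (Zero 1 1)
| ax_loop : ax (Comp Cap Cup) (Id 0).

Inductive eqv : tm -> tm -> Prop :=
| eqv_ax t u : ax t u -> wt t -> wt u -> dom t = dom u -> cod t = cod u ->
    eqv t u
| eqv_refl t : eqv t t
| eqv_sym t u : eqv t u -> eqv u t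
| eqv_trans t u v : eqv t u -> eqv u v -> eqv t v
| eqv_comp f f' g g' : eqv f f' -> eqv g g' -> eqv (Comp f g) (Comp f' g')
| eqv_tens f f' g g' : eqv f f' -> eqv g g' -> eqv (Tens f g) (Tens f' g')
| eqv_add f f' g g' : eqv f f' -> eqv g g' -> eqv (Add f g) (Add f' g')
| eqv_scal c f f' : eqv f f' -> eqv (Scal c f) (Scal c f').

(* Cauchy completion CrysTL: additive envelope (objects = finite lists of    *)
(* objects of TL_0, morphisms = matrices of morphisms) followed by the       *)
(* idempotent completion (objects = (list, idempotent matrix)).              *)
(* Matrices are functions nat -> nat -> tm (row = target index, column =     *)
(* source index), only meaningful in range.                                  *)

Definition mat := nat -> nat -> tm.

Definition ismor (s t : seq nat) (M : mat) : Prop :=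
  forall i j, i < size t -> j < size s ->
    [/\ wt (M i j), dom (M i j) = nth 0 s j & cod (M i j) = nth 0 t i].

Definition meqv (s t : seq nat) (M N : mat) : Prop :=
  forall i j, i < size t -> j < size s -> eqv (M i j) (N i j).

(* matrix product M o N, with N : s -> m and M : m -> t *)
Definition mmul (s m t : seq nat) (M N : mat) : mat :=
  fun i j => foldr (fun l acc => Add (Comp (M i l) (N l j)) acc)
                   (Zero (nth 0 s j) (nth 0 t i)) (iota 0 (size m)).

(* tensor product in the additive envelope (lexicographic ordering) *)
Definition stens (s t : seq nat) : seq nat :=
  flatten [seq [seq a + b | b <- t] | a <- s].

(* M (x) N where N has r rows and c columns *)
Definition mtens (r c : nat) (M N : mat) : mat :=
  fun i j => Tens (M (i %/ r) (j %/ c)) (N (i %% r) (j %% c)).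

Record cobj := CObj { osz : seq nat; oidem : mat }.

Definition isobj (X : cobj) : Prop :=
  ismor (osz X) (osz X) (oidem X) /\
  meqv (osz X) (osz X) (mmul (osz X) (osz X) (osz X) (oidem X) (oidem X))
       (oidem X).

Definition ishom (X Y : cobj) (M : mat) : Prop :=
  ismor (osz X) (osz Y) M /\
  meqv (osz X) (osz Y)
       (mmul (osz X) (osz Y) (osz Y) (oidem Y)
             (mmul (osz X) (osz X) (osz Y) M (oidem X))) M.

Definition hom_eq (X Y : cobj) (M N : mat) : Prop := meqv (osz X) (osz Y) M N.

(* composition M o N with N : X -> Y, M : Y -> Z *)
Definition ccomp (X Y Z : cobj) (M N : mat) : mat :=
  mmul (osz X) (osz Y) (osz Z) M N.

Definition cid (X : cobj) : mat := oidem X.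

Definition otens (X Y : cobj) : cobj :=
  CObj (stens (osz X) (osz Y))
       (mtens (size (osz Y)) (size (osz Y)) (oidem X) (oidem Y)).

(* tensor product of morphisms f : X -> X', g : Y -> Y' *)
Definition htens (Y Y' : cobj) (f g : mat) : mat :=
  mtens (size (osz Y')) (size (osz Y)) f g.

(* A braiding on CrysTL.  The induced monoidal structure on the Cauchy      *)
(* completion has associators and unitors given by the identity idempotent  *)
(* matrices (objects (X(x)Y)(x)Z and X(x)(Y(x)Z) have the same underlying    *)
(* list and equivalent idempotents), so the hexagon axioms are stated in    *)
(* their strict form as equalities of matrices of morphisms.                *)
Record braiding := Braiding {
  br : cobj -> cobj -> mat;
  br_hom : forall X Y, isobj X -> isobj Y ->
    ishom (otens X Y) (otens Y X) (br X Y);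
  br_iso : forall X Y, isobj X -> isobj Y ->
    exists D, ishom (otens Y X) (otens X Y) D /\
      hom_eq (otens X Y) (otens X Y)
        (ccomp (otens X Y) (otens Y X) (otens X Y) D (br X Y))
        (cid (otens X Y)) /\
      hom_eq (otens Y X) (otens Y X)
        (ccomp (otens Y X) (otens X Y) (otens Y X) (br X Y) D)
        (cid (otens Y X));
  br_nat : forall X X' Y Y' f g,
    isobj X -> isobj X' -> isobj Y -> isobj Y' ->
    ishom X X' f -> ishom Y Y' g ->
    hom_eq (otens X Y) (otens Y' X')
      (ccomp (otens X Y) (otens X' Y') (otens Y' X')
         (br X' Y') (htens Y Y' f g))
      (ccomp (otens X Y) (otens Y X) (otens Y' X')
         (htens X X' g f) (br X Y));
  br_hex1 : forall X Y Z, isobj X -> isobj Y -> isobj Z ->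
    hom_eq (otens X (otens Y Z)) (otens (otens Y Z) X)
      (br X (otens Y Z))
      (ccomp (otens (otens X Y) Z) (otens (otens Y X) Z) (otens Y (otens Z X))
         (htens (otens X Z) (otens Z X) (cid Y) (br X Z))
         (htens Z Z (br X Y) (cid Z)));
  br_hex2 : forall X Y Z, isobj X -> isobj Y -> isobj Z ->
    hom_eq (otens (otens X Y) Z) (otens Z (otens X Y))
      (br (otens X Y) Z)
      (ccomp (otens X (otens Y Z)) (otens X (otens Z Y)) (otens (otens Z X) Y)
         (htens Y Y (br X Z) (cid Y))
         (htens (otens Y Z) (otens Z Y) (cid X) (br Y Z)))
}.

End TL0.

(* Main.v *)
Require Import Defs.
From mathcomp Require Import all_boot all_algebra.
From mathcomp Require Import zify.
Set Implicit Arguments. Unset Strict Implicit. Unset Printing Implicit Defensive.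
Import GRing.Theory.
Local Open Scope ring_scope.

Section Sem.
Variable k : fieldType.
Local Notation tm := (tm k).

Definition ind (b : bool) : k := if b then 1 else 0.

Fixpoint words (n : nat) : seq (seq bool) :=
  if n is n'.+1 then [seq x :: w | x <- [:: true; false], w <- words n']
  else [:: [::]].

Fixpoint sem (t : tm) (w' w : seq bool) {struct t} : k :=
  match t with
  | Id n => ind ((w' == w) && (size w == n))
  | Cup => ind ((w' == [:: false; true]) && (w == [::]))
  | Cap => ind ((w' == [::]) && (w == [:: false; true]))
  | Comp f g => \sum_(v <- words (dom f)) sem f w' v * sem g v w
  | Tens f g => sem f (take (cod f) w') (take (dom f) w) *
                sem g (drop (cod f) w') (drop (dom f) w)
  | Zero _ _ => 0
  | Add f g => sem f w' w + sem g w' w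
  | Scal c f => c * sem f w' w
  end.

(* bicyclic invariant *)
Definition bmul (x y : nat * nat) : nat * nat :=
  (x.1 + (y.1 - x.2), (x.2 - y.1) + y.2)%N.
Definition gen (b : bool) : nat * nat := if b then (1, 0)%N else (0, 1)%N.
Definition phi (w : seq bool) : nat * nat :=
  foldr (fun b acc => bmul (gen b) acc) (0, 0)%N w.

Lemma bmulA x y z : bmul x (bmul y z) = bmul (bmul x y) z.
Proof.
case: x => a b; case: y => c d; case: z => e f; rewrite /bmul /=.
congr pair; lia.
Qed.

Lemma phi_cat a b : phi (a ++ b) = bmul (phi a) (phi b).
Proof.
elim: a => [|x a IH] /=.
  by case: (phi b) => c d; rewrite /bmul /= subn0 sub0n add0n.
by rewrite IH bmulA.
Qed.

Lemma inv_sem t w' w : phi w' != phi w -> sem t w' w = 0.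
Proof.
elim: t w' w => [n|||f IHf g IHg|f IHf g IHg|m n|f IHf g IHg|c f IHf] w' w H /=.
- by rewrite /ind; case: eqP => [E|] //=; rewrite E eqxx in H.
- by rewrite /ind; case: eqP => [E1|] //=; case: eqP => [E2|] //; rewrite E1 E2 in H.
- by rewrite /ind; case: eqP => [E1|] //=; case: eqP => [E2|] //; rewrite E1 E2 in H.
- apply: big1 => v _.
  case: (eqVneq (phi w') (phi v)) => E; last by rewrite IHf // mul0r.
  by rewrite IHg ?mulr0 // -E.
- case: (eqVneq (phi (take (cod f) w')) (phi (take (dom f) w))) => E;
    last by rewrite IHf // mul0r.
  rewrite IHg ?mulr0 //; apply: contra H => /eqP E2.
  by rewrite -(cat_take_drop (cod f) w') -(cat_take_drop (dom f) w) !phi_cat E E2.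
- by [].
- by rewrite IHf // IHg // addr0.
- by rewrite IHf // mulr0.
Qed.


Lemma words_size n v : v \in words n -> size v = n.
Proof.
elim: n v => [|n IH] v /=; first by rewrite inE => /eqP ->.
by rewrite !mem_cat in_nil orbF => /orP [] /mapP [w Hw ->] /=; rewrite IH.
Qed.

Lemma words_S n : words n.+1 = [seq x :: w | x <- [:: true; false], w <- words n].
Proof. by []. Qed.

Lemma indE b : ind b = if b then 1 else 0. Proof. by []. Qed.

Lemma ind_and a b : ind a * ind b = ind (a && b).
Proof. by case: a; case: b; rewrite /ind /= ?mul1r ?mul0r. Qed.

Lemma sum_words_ind n x (F : seq bool -> k) :
  \sum_(v <- words n) ind (v == x) * F v = ind (size x == n) * F x.
Proof.
elim: n x F => [|n IH] x F.
  by rewrite big_cons big_nil addr0; case: x => [|a x] //=; rewrite /ind !mul0r.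
rewrite words_S big_allpairs_dep !big_cons big_nil /= addr0.
case: x => [|a x] /=.
  by rewrite !big1 ?addr0 ?mul0r // => v _; rewrite /ind mul0r.
have E y : \sum_(i <- words n) ind (y :: i == a :: x) * F (y :: i)
   = ind (y == a) * (ind (size x == n) * F (y :: x)).
  transitivity (\sum_(i <- words n) ind (i == x) * (ind (y == a) * F (y :: i)));
    last by rewrite IH mulrCA.
  apply: eq_bigr => i _; rewrite eqseq_cons /ind.
  by case: (y == a); case: (i == x); rewrite ?mul0r ?mul1r ?mulr0.
rewrite !E eqSS; case: (a) => /=; rewrite /ind /= ?mul0r ?mul1r ?addr0 ?add0r //.
Qed.

Lemma sum_words_cat m n (F : seq bool -> k) :
  \sum_(v <- words (m + n)) F v = \sum_(a <- words m) \sum_(b <- words n) F (a ++ b).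
Proof.
elim: m F => [|m IH] F; first by rewrite add0n big_cons big_nil addr0.
rewrite addSn !words_S !big_allpairs_dep; apply: eq_bigr => x _.
by rewrite IH.
Qed.

Lemma supp t w' w : wt t -> (size w' != cod t) || (size w != dom t) -> sem t w' w = 0.
Proof.
elim: t w' w => [n|||f IHf g IHg|f IHf g IHg|m n|f IHf g IHg|c f IHf] w' w /=.
- move=> _ H; rewrite /ind; case: eqP => [E|] //=; subst w'.
  by move: H; rewrite orbb; case: eqP.
- move=> _ H; rewrite /ind; case: eqP => [E|] //=; case: eqP => [E2|] //.
  by move: H; rewrite E E2.
- move=> _ H; rewrite /ind; case: eqP => [E|] //=; case: eqP => [E2|] //.
  by move: H; rewrite E E2.
- case/and3P => wf wg /eqP ec H; apply: big1_seq => v /andP[_ /words_size sv].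
  case/orP: H => H; first by rewrite IHf ?mul0r // H.
  by rewrite IHg ?mulr0 // H orbT.
- case/andP => wf wg H.
  case/orP: H => H.
    case: (ltnP (size w') (cod f)) => L.
      by rewrite IHf ?mul0r //; apply/orP; left; rewrite size_take; case: ifP => C; apply/eqP; lia.
    rewrite IHg ?mulr0 //; apply/orP; left; rewrite size_drop; apply: contra H => /eqP E.
    by apply/eqP; lia.
  case: (ltnP (size w) (dom f)) => L.
    by rewrite IHf ?mul0r //; apply/orP; right; rewrite size_take; case: ifP => C; apply/eqP; lia.
  rewrite IHg ?mulr0 //; apply/orP; right; rewrite size_drop; apply: contra H => /eqP E.
  by apply/eqP; lia.
- by [].
- case/and4P => wf wg /eqP ed /eqP ec H.
  by rewrite IHf // IHg ?addr0 // -ed -ec.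
- by move=> wf H; rewrite IHf // mulr0.
Qed.

Lemma eqv_pres (t u : tm) : eqv t u -> [/\ wt t = wt u, dom t = dom u & cod t = cod u].
Proof.
elim=> {t u} /=.
- by move=> t u _ -> -> -> ->.
- by [].
- by move=> t u _ [-> -> ->].
- by move=> t u v _ [-> -> ->] _ [-> -> ->].
- by move=> f f' g g' _ [-> -> ->] _ [-> -> ->].
- by move=> f f' g g' _ [-> -> ->] _ [-> -> ->].
- by move=> f f' g g' _ [-> -> ->] _ [-> -> ->].
- by move=> c f f' _ [-> -> ->].
Qed.


Lemma ax_sound (t u : tm) : ax t u -> wt t -> wt u -> dom t = dom u -> cod t = cod u ->
  forall w' w, sem t w' w = sem u w' w.
Proof.
case => [f g h|f g|f|f|c f g|c d f|c d f|f|f g h|f|f|f f' g|f g g'|c f g|c f g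
        |f g h|f|f|m n|f g f' g'|f f' g|f g g'|c f g|c f g| | |] /= Wt Wu Hd Hc w' w.
- by rewrite addrA.
- by rewrite addrC.
- by rewrite addr0.
- by rewrite mulN1r subrr.
- by rewrite mulrDr.
- by rewrite mulrDl.
- by rewrite mulrA.
- by rewrite mul1r.
-
  under eq_bigr do rewrite big_distrr.
  rewrite exchange_big /=; apply: eq_bigr => x _; rewrite big_distrl /=.
  by apply: eq_bigr => v _; rewrite mulrA.
-
  have wf := Wu.
  rewrite (eq_big_seq (fun v => ind (v == w') * sem f v w)); last first.
    move=> v /words_size sv; rewrite sv eqxx andbT eq_sym //.
  rewrite sum_words_ind /ind; case: eqP => [_|/eqP H]; first by rewrite mul1r.
  by rewrite mul0r supp // H.
-
  have wf := Wu.
  rewrite (eq_big_seq (fun v => ind (v == w) * (ind (size w == dom f) * sem f w' v))); last first.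
    move=> v _; rewrite /ind; case: (v == w); case: (size w == dom f);
    by rewrite /= ?mul0r ?mul1r ?mulr0 ?mulr1.
  rewrite sum_words_ind /ind; case: eqP => [_|/eqP H]; first by rewrite !mul1r.
  by rewrite mul0r supp // H orbT.
-
  case/and3P: Wt => /and4P [_ _ /eqP Ed _] _ _.
  by rewrite -Ed -big_split /=; apply: eq_bigr => v _; rewrite mulrDl.
- by rewrite -big_split /=; apply: eq_bigr => v _; rewrite mulrDr.
- by rewrite big_distrr /=; apply: eq_bigr => v _; rewrite mulrA.
- by rewrite big_distrr /=; apply: eq_bigr => v _; rewrite mulrCA.
-
  rewrite take_drop drop_drop take_drop drop_drop !take_takel ?leq_addr //.
  by rewrite mulrA [(cod g + cod f)%N]addnC [(dom g + dom f)%N]addnC.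
- by rewrite !take0 !drop0 /ind /= mul1r.
-
  case: (boolP ((size w' == cod f) && (size w == dom f))) => [/andP [/eqP E1 /eqP E2]|H].
    rewrite -E1 -E2 !take_size !drop_size /ind /= mulr1 //.
  rewrite [sem f w' w]supp //; last by rewrite -negb_and.
  rewrite /ind; case: eqP => [E|]; last by rewrite /= mulr0.
  case: eqP => [E'|]; last by rewrite /= mulr0.
  move: E'; rewrite size_drop => E'.
  have E'' : size (drop (cod f) w') = 0%N by rewrite E size_drop.
  move: E''; rewrite size_drop => E''.
  rewrite supp ?mul0r //.
  rewrite (take_oversize (n:=cod f)) ?(take_oversize (n:=dom f)) -?negb_and //; lia.
-
  rewrite ind_and; congr ind; case: (boolP (w' == w)) => [/eqP ->|H].
    rewrite !eqxx /= size_take size_drop.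
    case: ifP => C; apply/andP/eqP => [[/eqP A /eqP B]|A]; try lia; split; apply/eqP; lia.
  apply/negbTE; apply: contra H => /andP[/andP[/eqP E1 _] /andP[/eqP E2 _]].
  by rewrite -(cat_take_drop m w') E1 E2 cat_take_drop.
-
  case/andP: Wu => /and3P [wf wf' /eqP E1] /and3P [wg wg' /eqP E2].
  rewrite E1 sum_words_cat big_distrl /=.
  apply: eq_big_seq => a /words_size sa; rewrite big_distrr /=.
  apply: eq_big_seq => b /words_size sb.
  rewrite take_size_cat // drop_size_cat //.
  by rewrite -!mulrA; congr (_ * _); rewrite mulrCA; congr (_ * _); rewrite mulrCA.
- case/andP: Wt => /and4P [_ _ /eqP Ed /eqP Ec] _.
  by rewrite -Ed -Ec mulrDl.
- by rewrite mulrDr.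
- by rewrite mulrA.
- by rewrite mulrCA.
-
  apply: big1 => v _; rewrite /ind.
  case H1: (drop 1 v == [:: false; true]); last by rewrite andbF /= ?mul0r ?mulr0 ?mul0r.
  case H2: (take 2 v == [:: false; true]); last by rewrite /= ?mul0r ?mulr0 ?mul0r.
  exfalso; move: H1 H2; case: v => [|a [|b v]] //=; rewrite take0.
  by case: a; case: b.
-
  apply: big1 => v _; rewrite /ind.
  case H1: (take 2 v == [:: false; true]); last by rewrite andbF /= ?mul0r ?mulr0 ?mul0r.
  case H2: (drop 1 v == [:: false; true]); last by rewrite /= ?mul0r ?mulr0 ?mul0r.
  exfalso; move: H1 H2; case: v => [|a [|b v]] //=; rewrite take0.
  by case: a; case: b.
-
  rewrite !big_cons big_nil /ind /=; case: w' => [|a w']; case: w => [|b w].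
  all: rewrite /= ?mul0r ?mulr0 ?addr0 ?add0r ?mul1r //.
  by rewrite andbF.
Qed.


Lemma sound (t u : tm) : eqv t u -> wt t -> forall w' w, sem t w' w = sem u w' w.
Proof.
elim=> {t u}.
- by move=> t u Hax Wt Wu Hd Hc _; apply: ax_sound.
- by [].
- move=> t u Htu IH Wu w' w; symmetry; apply: IH.
  by case: (eqv_pres Htu) => ->.
- move=> t u v Htu IH1 Huv IH2 Wt w' w; rewrite IH1 // IH2 //.
  by case: (eqv_pres Htu) => <-.
- move=> f f' g g' Hf IHf Hg IHg /= /and3P [wf wg _] w' w.
  case: (eqv_pres Hf) => _ <- _.
  by apply: eq_bigr => v _; rewrite IHf // IHg.
- move=> f f' g g' Hf IHf Hg IHg /= /andP [wf wg] w' w.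
  case: (eqv_pres Hf) => _ <- <-.
  by rewrite IHf // IHg.
- move=> f f' g g' Hf IHf Hg IHg /= /and4P [wf wg _ _] w' w.
  by rewrite IHf // IHg.
- by move=> c f f' Hf IHf /= wf w' w; rewrite IHf.
Qed.

End Sem.
Section Main.
Variable k : fieldType.
Local Notation tm := (tm k).

Definition O (n : nat) : cobj k := CObj [:: n] (fun _ _ => Id k n).

Lemma eqv_add0 (x : tm) m n : wt x -> dom x = m -> cod x = n -> eqv (Add x (Zero k m n)) x.
Proof.
move=> wx <- <-; apply: (eqv_ax (ax_add0 x)) => //=.
by rewrite wx !eqxx.
Qed.

Lemma eqv_idl (x : tm) n : wt x -> cod x = n -> eqv (Comp (Id k n) x) x.
Proof.
move=> wx <-; apply: (eqv_ax (ax_compIdl x)) => //=.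
by rewrite wx eqxx.
Qed.

Lemma eqv_idr (x : tm) n : wt x -> dom x = n -> eqv (Comp x (Id k n)) x.
Proof.
move=> wx <-; apply: (eqv_ax (ax_compIdr x)) => //=.
by rewrite wx eqxx.
Qed.

Lemma isobj1 n (e : tm) : wt e -> dom e = n -> cod e = n -> eqv (Comp e e) e ->
  isobj (CObj [:: n] (fun _ _ => e)).
Proof.
move=> we de ce H; split.
  by move=> [|i] [|j] //= _ _; split.
move=> [|i] [|j] //= _ _; rewrite /mmul /=.
apply: eqv_trans H; apply: eqv_add0 => //=.
by rewrite we ce de eqxx.
Qed.

Lemma isobjO n : isobj (O n).
Proof.
by apply: isobj1 => //; apply: eqv_idl.
Qed.

Lemma isobjOO a b : isobj (otens (O a) (O b)).
Proof.
have H : isobj (CObj [:: (a + b)%N] (fun _ _ => Tens (Id k a) (Id k b))).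
  apply: isobj1 => //.
  apply: eqv_trans (eqv_ax (ax_interchange _ _ _ _) _ _ _ _) _ => //=.
    by rewrite !eqxx.
  by apply: eqv_tens; apply: eqv_idl.
exact: H.
Qed.


Lemma ishom1 a b (ea eb m : tm) :
  wt ea -> dom ea = a -> cod ea = a -> wt eb -> dom eb = b -> cod eb = b ->
  wt m -> dom m = a -> cod m = b -> eqv (Comp eb (Comp m ea)) m ->
  ishom (CObj [:: a] (fun _ _ => ea)) (CObj [:: b] (fun _ _ => eb)) (fun _ _ => m).
Proof.
move=> wea dea cea web deb ceb wm dm cm H; split.
  by move=> [|i] [|j] //= _ _; split.
move=> [|i] [|j] //= _ _; rewrite /mmul /=.
apply: eqv_trans H.
apply: eqv_trans (eqv_add0 _ _ _) _.
- by rewrite /= wm wea web dm cm dea cea deb !eqxx.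
- by [].
- by [].
apply: eqv_comp; first exact: eqv_refl.
apply: eqv_add0 => //=.
by rewrite wm wea dm cea eqxx.
Qed.

Lemma no_braiding : ~ inhabited (braiding k).
Proof.
case=> [[br hom iso nat hex1 hex2]].
have HO0 := isobjO 0; have HO1 := isobjO 1; have HO11 := isobjOO 1 1.
set b := br (O 1) (O 1) 0 0.
have [wb db cb] : [/\ wt b, dom b = 2%N & cod b = 2%N].
  by case: ((hom _ _ HO1 HO1).1 0 0 isT isT).
set c12 := br (O 1) (otens (O 1) (O 1)) 0 0.
have [wc12 dc12 cc12] : [/\ wt c12, dom c12 = 3%N & cod c12 = 3%N].
  by case: ((hom _ _ HO1 HO11).1 0 0 isT isT).
set c10 := br (O 1) (O 0) 0 0.
have [wc10 dc10 cc10] : [/\ wt c10, dom c10 = 1%N & cod c10 = 1%N].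
  by case: ((hom _ _ HO1 HO0).1 0 0 isT isT).
have Hhex : eqv c12 (Add (Comp (Tens (Id k 1) b) (Tens b (Id k 1))) (Zero k 3 3))
  := hex1 _ _ _ HO1 HO1 HO1 0 0 isT isT.
have {}Hhex := sound Hhex wc12 [:: false; true; false] [:: false; false; true].
rewrite /= db cb add0n /= !big_cons !big_nil /= in Hhex.
rewrite (@inv_sem k b [:: true; false] [:: true; true] isT)
        (@inv_sem k b [:: true; false] [:: false; true] isT) in Hhex.
rewrite !(mul0r, mulr0, add0r, addr0) in Hhex.
have Hf : ishom (O 1) (O 1) (fun _ _ => Id k 1).
  apply: ishom1 => //.
  by apply: eqv_trans (eqv_idl _ _) _; [| |apply: eqv_idl].
have Hg : ishom (O 0) (otens (O 1) (O 1)) (fun _ _ => Cup k).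
  have H : ishom (CObj [:: 0%N] (fun _ _ => Id k 0))
     (CObj [:: (1 + 1)%N] (fun _ _ => Tens (Id k 1) (Id k 1))) (fun _ _ => Cup k).
    apply: ishom1 => //.
    apply: eqv_trans (eqv_comp (eqv_refl _) (eqv_idr _ _)) _ => //.
    have T : eqv (Tens (Id k 1) (Id k 1)) (Id k 2) by apply: (eqv_ax (ax_tensId k 1 1)).
    apply: eqv_trans (eqv_comp T (eqv_refl _)) _.
    exact: eqv_idl.
  exact: H.
have Hnat : eqv (Add (Comp c12 (Tens (Id k 1) (Cup k))) (Zero k 1 3))
                (Add (Comp (Tens (Cup k) (Id k 1)) c10) (Zero k 1 3))
  := nat _ _ _ _ _ _ HO1 HO1 HO0 HO11 Hf Hg 0 0 isT isT.
have {}Hnat := sound Hnat.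
rewrite /= wc12 dc12 cc12 in Hnat.
have {}Hnat := Hnat isT [:: false; true; false] [:: false].
rewrite /= !big_cons !big_nil /= in Hnat.
rewrite Hhex !(mul0r, mulr0, add0r, addr0, mul1r) in Hnat.
case: (iso _ _ HO1 HO0) => D [HD [Hiso _]].
set d := D 0%N 0%N.
have [wd dd cd] : [/\ wt d, dom d = 1%N & cod d = 1%N].
  by case: (HD.1 0 0 isT isT).
have {}Hiso : eqv (Add (Comp d c10) (Zero k 1 1)) (Tens (Id k 1) (Id k 0))
  := Hiso 0 0 isT isT.
have {}Hiso := sound (eqv_sym Hiso) isT [:: false] [:: false].
rewrite /= dd /= !big_cons !big_nil /= in Hiso.
rewrite (@inv_sem k c10 [:: true] [:: false] isT) -Hnat in Hiso.
rewrite !(mul0r, mulr0, add0r, addr0, mul1r) in Hiso.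
by move: Hiso; apply/eqP; rewrite oner_eq0.
Qed.

End Main.

Unset Implicit Arguments.

Theorem mainTheorem13 (k : fieldType) : ~ inhabited (braiding k).
Proof. exact: (@no_braiding k). Qed.
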